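(* Let $\Sigma=(I,X,\mathcal U,\phi,Y,h)$ be a forward complete control system with outputs. Then the following are equivalent: (1) $\Sigma$ is ISS and $h$ is $\mathcal K$-bounded; (2) $\Sigma$ is IOS and IOSS.
   Context: Let $I\in\{\mathbb N_0,\mathbb R_0^+\}$. A forward complete control system with outputs $\Sigma=(I,X,\mathcal U,\phi,Y,h)$ consists of: a normed space $(X,\|\cdot\|_X)$; a vector space $U$ and a normed linear subspace $(\mathcal U,\|\cdot\|_{\mathcal U})$ of $\{u:I\to U\}$ such that for all $u\in\mathcal U,\tau\in I$, $u(\cdot+\tau)\in\mathcal U$ with $\|u(\cdot+\tau)\|_{\mathcal U}\le\|u\|_{\mathcal U}$, and for $t_2\ge t_1\ge 0$ the function $u|_{[t_1,t_2]}$ ($u$ on $[t_1,t_2]$, $0$ elsewhere) lies in $\mathcal U$ with $\|u|_{[t_1,t_2]}\|_{\mathcal U}\le\|u\|_{\mathcal U}$; a map $\phi:I\times X\times\mathcal U\to X$ with $\phi(0,x,u)=x$, causality (if $u,\tilde u$ agree on $[0,t]$ then $\phi(t,x,u)=\phi(t,x,\tilde u)$), and cocycle property $\phi(t+s,x,u)=\phi(s,\phi(t,x,u),u(t+\cdot))$; a normed space $Y$ and $h:X\times U\to Y$. Write $y(t,x,u)=h(\phi(t,x,u),u(t))$. $\mathcal K,\mathcal K_\infty,\mathcal{KL}$ are the standard comparison function classes. ISS: $\exists\beta\in\mathcal{KL},\gamma\in\mathcal K_\infty$ with $\|\phi(t,x,u)\|_X\le\beta(\|x\|_X,t)+\gamma(\|u\|_{\mathcal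 U})$ for all $x\in X,u\in\mathcal U,t\in I$. IOS: $\exists\beta\in\mathcal{KL},\gamma\in\mathcal K_\infty$ with $\|y(t,x,u)\|_Y\le\beta(\|x\|_X,t)+\gamma(\|u\|_{\mathcal U})$ for all $x,u,t$. IOSS: $\exists\beta\in\mathcal{KL},\gamma_1,\gamma_2\in\mathcal K$ with $\|\phi(t,x,u)\|_X\le\beta(\|x\|_X,t)+\gamma_1(\|u|_{[0,t]}\|_{\mathcal U})+\gamma_2(\sup_{s\in[0,t]}\|y(s,x,u)\|_Y)$ for all $x,u,t$. $h$ is $\mathcal K$-bounded: there exist $\sigma_1,\gamma_1\in\mathcal K$ with $\|h(x,u(0))\|_Y\le\sigma_1(\|x\|_X)+\gamma_1(\|u\|_{\mathcal U})$ for all $x\in X,u\in\mathcal U$. *)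

(* Defs.v *)
From HB Require Import structures.
From mathcomp Require Import all_boot all_order all_algebra.
From mathcomp Require Import all_classical all_reals all_analysis.
Set Implicit Arguments. Unset Strict Implicit. Unset Printing Implicit Defensive.
Import Order.TTheory GRing.Theory Num.Theory.
Import numFieldNormedType.Exports.
Local Open Scope classical_set_scope.
Local Open Scope ring_scope.

Section ControlSystems.
Variable R : realType.

Definition is_time (disc : bool) (t : R) : Prop :=
  0 <= t /\ (disc -> exists n : nat, t = n%:R).

Definition time (disc : bool) := {t : R | is_time disc t}.

Lemma is_time0 disc : is_time disc 0.
Proof. split=> // _; exists 0%N; by []. Qed.

Lemma is_timeD disc s t : is_time disc s -> is_time disc t -> is_time disc (s + t).
Proof.
move=> [s0 hs] [t0 ht]; split; first exact: addr_ge0.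
move=> d; have [n ->] := hs d; have [m ->] := ht d; exists (n + m)%N.
by rewrite natrD.
Qed.

Definition tzero (disc : bool) : time disc := exist _ 0 (is_time0 disc).
Definition tadd (disc : bool) (s t : time disc) : time disc :=
  exist _ (sval s + sval t) (is_timeD (svalP s) (svalP t)).

Definition tshift (disc : bool) (U : Type) (u : time disc -> U) (tau : time disc)
  : time disc -> U := fun s => u (tadd s tau).

Definition trestr (disc : bool) (U : lmodType R) (u : time disc -> U)
  (t1 t2 : time disc) : time disc -> U :=
  fun s => if (sval t1 <= sval s <= sval t2) then u s else 0.

Definition class_K (g : R -> R) : Prop :=
  g 0 = 0 /\ {within [set x | 0 <= x], continuous g} /\
  (forall x y, 0 <= x -> x < y -> g x < g y).

Definition class_Kinf (g : R -> R) : Prop :=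
  class_K g /\ (forall M : R, exists r, 0 <= r /\ M < g r).

Definition class_KL (b : R -> R -> R) : Prop :=
  (forall t, 0 <= t -> class_K (fun r => b r t)) /\
  (forall r, 0 <= r ->
     (forall s t, 0 <= s -> s <= t -> b r t <= b r s) /\
     b r t @[t --> +oo] --> 0).

Record ctrl_sys (disc : bool) (X : normedModType R) (U : lmodType R)
  (Y : normedModType R) := CtrlSys {
  Uset : set (time disc -> U);
  unorm : (time disc -> U) -> R;
  phi : time disc -> X -> (time disc -> U) -> X;
  hout : X -> U -> Y }.

Section Props.
Variables (disc : bool) (X : normedModType R) (U : lmodType R) (Y : normedModType R).
Variable S : ctrl_sys disc X U Y.

Local Notation I := (time disc).
Local Notation UU := (Uset S).
Local Notation nu := (unorm S).

Definition is_fc_ctrl_sys : Prop :=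
  [/\ UU (fun _ => 0) /\
      (forall a u v, UU u -> UU v -> UU (fun t => a *: u t + v t)),
      (forall u, UU u -> 0 <= nu u) /\ (forall u, UU u -> nu u = 0 -> u = (fun _ => 0)),
      (forall a u, UU u -> nu (fun t => a *: u t) = `|a| * nu u) /\
      (forall u v, UU u -> UU v -> nu (fun t => u t + v t) <= nu u + nu v),
      (forall u (tau : I), UU u -> UU (tshift u tau) /\ nu (tshift u tau) <= nu u) /\
      (forall u (t1 t2 : I), UU u -> sval t1 <= sval t2 ->
          UU (trestr u t1 t2) /\ nu (trestr u t1 t2) <= nu u) &
      [/\ (forall x u, UU u -> phi S (tzero disc) x u = x),
          (forall (t : I) x u v, UU u -> UU v ->
             (forall s : I, sval s <= sval t -> u s = v s) ->
             phi S t x u = phi S t x v) &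
          (forall (t s : I) x u, UU u ->
             phi S (tadd t s) x u = phi S s (phi S t x u) (tshift u t))]].

Definition yout (t : I) (x : X) (u : I -> U) : Y := hout S (phi S t x u) (u t).

Definition ISS : Prop :=
  exists beta gamma, class_KL beta /\ class_Kinf gamma /\
  forall x u (t : I), UU u -> `|phi S t x u| <= beta `|x| (sval t) + gamma (nu u).

Definition IOS : Prop :=
  exists beta gamma, class_KL beta /\ class_Kinf gamma /\
  forall x u (t : I), UU u -> `|yout t x u| <= beta `|x| (sval t) + gamma (nu u).

(* extension of g to \bar R at +oo (sup may be infinite) *)
Definition extK (g : R -> R) (e : \bar R) : \bar R :=
  if e is r%:E then (g r)%:E else +oo%E.

Definition IOSS : Prop :=
  exists beta gamma1 gamma2, class_KL beta /\ class_K gamma1 /\ class_K gamma2 /\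
  forall x u (t : I), UU u ->
    ((`|phi S t x u|)%:E <=
      (beta `|x| (sval t) + gamma1 (nu (trestr u (tzero disc) t)))%:E +
      extK gamma2 (ereal_sup [set (`|yout s x u|)%:E | s in [set s : I | (sval s <= sval t)%R]]))%E.

Definition K_bounded_output : Prop :=
  exists sigma1 gamma1, class_K sigma1 /\ class_K gamma1 /\
  forall x u, UU u -> `|hout S x (u (tzero disc))| <= sigma1 `|x| + gamma1 (nu u).

End Props.
End ControlSystems.

(* Main.v *)
Require Import Defs.
From HB Require Import structures.
From mathcomp Require Import all_boot all_order all_algebra.
From mathcomp Require Import all_classical all_reals all_analysis.
From mathcomp Require Import ring lra.
Set Implicit Arguments. Unset Strict Implicit. Unset Printing Implicit Defensive.
Import Order.TTheory GRing.Theory Num.Theory.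
Import numFieldNormedType.Exports.
Local Open Scope classical_set_scope.
Local Open Scope ring_scope.
Lemma cont_eps (R : realType) (g : R -> R) :
  {within [set x | 0 <= x], continuous g} <->
  (forall x, 0 <= x -> forall e, 0 < e -> exists2 d, 0 < d &
     forall y, 0 <= y -> `|y - x| < d -> `|g y - g x| < e).
Proof.
rewrite -[X in X <-> _]/(continuous (g : subspace _ -> _)).
rewrite subspace_continuousP; split.
- move=> H x x0 e e0.
  have := H x x0; move/cvgrPdist_lt => /(_ e e0).
  rewrite /within /= nearE => /nbhs_normP [d /= d0 Hd].
  exists d => // y y0 yx; rewrite distrC; apply: Hd => //=.
  by rewrite -opprB normrN.
- move=> H x x0; apply/cvgrPdist_lt => e e0.
  have [d d0 Hd] := H x x0 e e0.
  rewrite /within /= nearE; apply/nbhs_normP; exists d => //= y xy y0.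
  rewrite distrC; apply: Hd => //; by rewrite -opprB normrN.
Qed.

Lemma lim_eps (R : realType) (f : R -> R) :
  f t @[t --> +oo] --> 0 <-> (forall e, 0 < e -> exists M, forall t, M < t -> `|f t| < e).
Proof.
rewrite cvgrPdist_lt; split.
- move=> H e e0; have [M [_ HM]] := H e e0.
  exists M => t Mt; rewrite -(normrN); rewrite -[- f t]add0r. exact: HM.
- move=> H e e0; have [M HM] := H e e0; exists M; split; first exact: num_real. move=> t Mt.
  by rewrite sub0r normrN; apply: HM.
Qed.
Section KL.
Variable R : realType.
Implicit Types (f g : R -> R) (b : R -> R -> R).

Lemma K_le g : class_K g -> forall x y, 0 <= x -> x <= y -> g x <= g y.
Proof.
move=> [_ [_ Hi]] x y x0; rewrite le_eqVlt => /orP [/eqP -> //|xy].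
exact/ltW/Hi.
Qed.

Lemma K_ge0 g : class_K g -> forall x, 0 <= x -> 0 <= g x.
Proof. move=> Kg x x0; have := K_le Kg (lexx 0) x0; by case: Kg => ->. Qed.

Lemma K_add f g : class_K f -> class_K g -> class_K (fun r => f r + g r).
Proof.
move=> [f0 [fc fi]] [g0 [gc gi]]; split; first by rewrite f0 g0 addr0.
split; last by move=> x y x0 xy; apply: ltrD; [apply: fi|apply: gi].
move: fc gc; rewrite !cont_eps => fc gc x x0 e e0.
have e20 : 0 < e / 2 by rewrite divr_gt0.
have [d1 d10 H1] := fc x x0 _ e20; have [d2 d20 H2] := gc x x0 _ e20.
exists (Num.min d1 d2); first by rewrite lt_min d10 d20.
move=> y y0; rewrite lt_min => /andP [yd1 yd2].
have -> : f y + g y - (f x + g x) = (f y - f x) + (g y - g x) by ring.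
apply: (le_lt_trans (ler_normD _ _)).
have -> : e = e / 2 + e / 2 by field.
by apply: ltrD; [apply: H1|apply: H2].
Qed.

Lemma K_comp f g : class_K f -> class_K g -> class_K (fun r => f (g r)).
Proof.
move=> Kf Kg; have g_ge0 := K_ge0 Kg.
move: (Kf) (Kg) => [f0 [fc fi]] [g0 [gc gi]]; split; first by rewrite g0 f0.
split; last by move=> x y x0 xy; apply: fi; [apply: g_ge0|apply: gi].
move: fc gc; rewrite !cont_eps => fc gc x x0 e e0.
have [d1 d10 H1] := fc (g x) (g_ge0 _ x0) _ e0.
have [d d0 H] := gc x x0 _ d10.
exists d => // y y0 yx; apply: H1; [exact: g_ge0|exact: H].
Qed.

Lemma K_id : class_K (fun r : R => r).
Proof.
split => //; split => //; rewrite cont_eps => x x0 e e0; exists e => //.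
Qed.

Lemma K_dbl : class_K (fun r : R => r + r).
Proof. exact: (K_add K_id K_id). Qed.

Lemma K_split f : class_K f -> forall a c, 0 <= a -> 0 <= c ->
  f (a + c) <= f (a + a) + f (c + c).
Proof.
move=> Kf a c a0 c0.
have Ha := K_ge0 Kf (addr_ge0 a0 a0); have Hc := K_ge0 Kf (addr_ge0 c0 c0).
have [ac|ca] := leP a c.
- apply: (le_trans (K_le Kf (addr_ge0 a0 c0) (_ : a + c <= c + c))).
    by rewrite lerD2r.
  by rewrite lerDr.
- apply: (le_trans (K_le Kf (addr_ge0 a0 c0) (_ : a + c <= a + a))).
    by rewrite lerD2l ltW.
  by rewrite lerDl.
Qed.

Lemma Kinf_of f : class_K f -> class_Kinf (fun r => f r + r).
Proof.
move=> Kf; split; first exact: K_add Kf K_id.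
move=> M; exists (Num.max M 0 + 1).
have h0 : 0 <= Num.max M 0 + 1 by rewrite addr_ge0 // le_max lexx orbT.
split => //; have := K_ge0 Kf h0.
have : M <= Num.max M 0 by rewrite le_max lexx.
move=> H1 H2; lra.
Qed.

Lemma KL_K b t : class_KL b -> 0 <= t -> class_K (fun r => b r t).
Proof. by move=> [H _] /H. Qed.

Lemma KL_ge0 b : class_KL b -> forall r t, 0 <= r -> 0 <= t -> 0 <= b r t.
Proof. move=> Kb r t r0 t0; exact: (K_ge0 (KL_K Kb t0) r0). Qed.

Lemma KL_dec b : class_KL b -> forall r s t, 0 <= r -> 0 <= s -> s <= t -> b r t <= b r s.
Proof. move=> [_ H] r s t r0; exact: (proj1 (H r r0)). Qed.

Lemma KL_mon b : class_KL b -> forall r r' t, 0 <= t -> 0 <= r -> r <= r' -> b r t <= b r' t.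
Proof. move=> Kb r r' t t0; exact: (K_le (KL_K Kb t0)). Qed.

Lemma KL_comp f b : class_K f -> class_KL b -> class_KL (fun r t => f (b r t)).
Proof.
move=> Kf Kb; split; first by move=> t t0; exact: K_comp Kf (KL_K Kb t0).
move=> r r0; split.
  move=> s t s0 st; apply: (K_le Kf); first exact: KL_ge0 Kb _ _ r0 (le_trans s0 st).
  exact: KL_dec.
have [_ [fc _]] := Kf; move: fc; rewrite cont_eps => fc.
have [_ Hb] := Kb; have [_ lim] := Hb r r0; move: lim; rewrite !lim_eps => lim.
move=> e e0; have [d d0 Hd] := fc 0 (lexx 0) e e0.
have [M HM] := lim d d0; exists (Num.max M 0) => t; rewrite gt_max => /andP [Mt t0].
have := Hd (b r t) (KL_ge0 Kb r0 (ltW t0)); rewrite !subr0; case: Kf => -> _.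
rewrite subr0; apply; exact: HM.
Qed.

Lemma KL_in b a : class_KL b -> class_K a -> class_KL (fun r t => b (a r) t).
Proof.
move=> Kb Ka; split; first by move=> t t0; exact: K_comp (KL_K Kb t0) Ka.
move=> r r0; have [_ Hb] := Kb; exact: Hb (K_ge0 Ka r0).
Qed.

Lemma KL_add b c : class_KL b -> class_KL c -> class_KL (fun r t => b r t + c r t).
Proof.
move=> Kb Kc; split; first by move=> t t0; exact: K_add (KL_K Kb t0) (KL_K Kc t0).
move=> r r0; split.
  by move=> s t s0 st; apply: lerD; apply: KL_dec.
have [_ Hb] := Kb; have [_ lb] := Hb r r0; have [_ Hc] := Kc; have [_ lc] := Hc r r0.
move: lb lc; rewrite !lim_eps => lb lc e e0.
have e20 : 0 < e / 2 by rewrite divr_gt0.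
have [M1 H1] := lb _ e20; have [M2 H2] := lc _ e20.
exists (Num.max M1 M2) => t; rewrite gt_max => /andP [t1 t2].
apply: (le_lt_trans (ler_normD _ _)).
have -> : e = e / 2 + e / 2 by field.
by apply: ltrD; [apply: H1|apply: H2].
Qed.

Definition tau (t : R) := Num.max 0 ((t - 1) / 2).

Lemma tau_ge0 t : 0 <= tau t.
Proof. by rewrite /tau le_max lexx. Qed.

Lemma tau_mon s t : s <= t -> tau s <= tau t.
Proof.
move=> st; rewrite /tau ge_max !le_max lexx /=; apply/orP; right.
rewrite ler_pM2r ?invr_gt0 //; by rewrite lerD2r.
Qed.

Lemma KL_tau b : class_KL b -> class_KL (fun r t => b r (tau t)).
Proof.
move=> Kb; split; first by move=> t _; exact: KL_K Kb (tau_ge0 t).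
move=> r r0; split.
  move=> s t _ st; apply: KL_dec => //; [exact: tau_ge0|exact: tau_mon].
have [_ Hb] := Kb; have [_ lb] := Hb r r0; move: lb; rewrite !lim_eps => lb e e0.
have [M HM] := lb e e0; exists (2 * M + 1) => t Mt; apply: HM.
rewrite /tau lt_max; apply/orP; right.
rewrite ltr_pdivlMr //; lra.
Qed.

End KL.
Section Sys.
Variable R : realType.

Lemma time_eq disc (a b : time R disc) : sval a = sval b -> a = b.
Proof.
case: a b => [a Ha] [b Hb] /= ab; subst b; congr exist; exact: Prop_irrelevance.
Qed.

Lemma split_time disc (t : time R disc) : exists t1 t2 : time R disc,
  sval t1 + sval t2 = sval t /\ tau (sval t) <= sval t1 /\ tau (sval t) <= sval t2.
Proof.
case: t => t [t0 Hd] /=.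
case: disc Hd => Hd.
- have [n En] := Hd erefl; subst t.
  set h := n./2.
  have Ht k : is_time true (k%:R : R) by split => // _; exists k.
  exists (exist _ _ (Ht h)), (exist _ _ (Ht (n - h)%N)) => /=.
  have hn : (h <= n)%N by rewrite /h leq_half_double; apply: leqW; rewrite -addnn leq_addr.
  have E : (n%:R : R) = (odd n)%:R + h%:R + h%:R.
    by rewrite -!natrD -addnA addnn -[X in X%:R](odd_double_half n).
  have o1 : ((odd n)%:R : R) <= 1 by case: (odd n).
  have o0 : (0 : R) <= (odd n)%:R by [].
  rewrite natrB //; split; first by rewrite addrC subrK.
  rewrite /tau !ge_max !ler0n /=; split; rewrite ler_pdivrMr //; lra.
- have Ht : is_time false (t / 2) by split => //; rewrite divr_ge0.
  exists (exist _ _ Ht), (exist _ _ Ht) => /=; split; first by field.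
  have : tau t <= t / 2.
    by rewrite /tau ge_max divr_ge0 //= ler_pM2r ?invr_gt0 // lerBlDr lerDl.
  by [].
Qed.
End Sys.
Section Ext.
Variable R : realType.
Local Open Scope ereal_scope.

Lemma sup_bound (g : R -> R) (T : Type) (P : set T) (f : T -> R) (M : R) s0 :
  class_K g -> P s0 -> (forall s, P s -> (0 <= f s <= M)%R) ->
  extK g (ereal_sup [set (f s)%:E | s in P]) <= (g M)%:E.
Proof.
move=> Kg Ps0 Hf.
have hub : ereal_sup [set (f s)%:E | s in P] <= M%:E.
  apply: ub_ereal_sup => _ [s Ps <-]; rewrite lee_fin; by case/andP: (Hf s Ps).
have hlb : (f s0)%:E <= ereal_sup [set (f s)%:E | s in P].
  by apply: ereal_sup_ubound; exists s0.
move: hub hlb; case: (ereal_sup _) => [r| |] //= rM fr.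
rewrite lee_fin; apply: (K_le Kg) => //.
have /andP [h0 _] := Hf s0 Ps0; apply: (le_trans h0); by rewrite -lee_fin.
Qed.

Lemma extK_ge0 (g : R -> R) e : class_K g -> 0 <= e -> 0 <= extK g e.
Proof.
move=> Kg; case: e => [r| |] //=; rewrite !lee_fin => r0. exact: (K_ge0 Kg r0).
Qed.
End Ext.
Section Main.
Variables (R : realType) (disc : bool) (X : normedModType R)
  (U : lmodType R) (Y : normedModType R) (S : ctrl_sys disc X U Y).

Lemma tge0 (t : time R disc) : 0 <= sval t.
Proof. exact: (proj1 (svalP t)). Qed.

Lemma dir1 : is_fc_ctrl_sys S -> ISS S -> K_bounded_output S -> IOS S /\ IOSS S.
Proof.
move=> [[U0 Ulin] [nu0 _] _ [Hsh Hres] [Hid Hcaus Hcoc]].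
move=> [b [g [Kb [Kg Hiss]]]] [s1 [g1 [Ks1 [Kg1 Hh]]]].
have Kg' := proj1 Kg.
split.
- exists (fun r t => s1 ((b r t) + (b r t))), (fun q => (s1 (g q + g q) + g1 q) + q).
  split; first exact: KL_comp (K_comp Ks1 (K_dbl R)) Kb.
  split; first exact: Kinf_of (K_add (K_comp Ks1 (K_comp (K_dbl R) Kg')) Kg1).
  move=> x u t Uu.
  have [Ush nush] := Hsh u t Uu.
  have := Hh (phi S t x u) (tshift u t) Ush.
  have -> : tshift u t (tzero R disc) = u t.
    by rewrite /tshift; congr u; apply: time_eq => /=; rewrite add0r.
  rewrite /yout => H; apply: (le_trans H).
  have hx := Hiss x u t Uu.
  have b0 : 0 <= b `|x| (sval t) := KL_ge0 Kb (normr_ge0 _) (tge0 t).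
  have g0 : 0 <= g (unorm S u) := K_ge0 Kg' (nu0 u Uu).
  have H1 : s1 `|phi S t x u| <= s1 (b `|x| (sval t) + b `|x| (sval t)) + s1 (g (unorm S u) + g (unorm S u)).
    apply: le_trans (K_split Ks1 b0 g0); by apply: (K_le Ks1).
  have H2 : g1 (unorm S (tshift u t)) <= g1 (unorm S u) := K_le Kg1 (nu0 _ Ush) nush.
  have H3 : 0 <= unorm S u := nu0 u Uu.
  lra.
- exists b, g, g. split => //; split => //; split => //.
  move=> x u t Uu.
  have [Ur _] := Hres u (tzero R disc) t Uu (tge0 t).
  have -> : phi S t x u = phi S t x (trestr u (tzero R disc) t).
    apply: Hcaus => // s st; rewrite /trestr /= st (tge0 s) //.
  have H := Hiss x _ t Ur.
  rewrite -[X in (X <= _)%E]adde0; apply: leeD; first by rewrite lee_fin.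
  apply: extK_ge0 => //; apply: (@le_trans _ _ (`|yout S t x u|)%:E).
    by rewrite lee_fin.
  by apply: ereal_sup_ubound; exists t => /=.
Qed.

End Main.
Section Main2.
Variables (R : realType) (disc : bool) (X : normedModType R)
  (U : lmodType R) (Y : normedModType R) (S : ctrl_sys disc X U Y).

Lemma dir2 : is_fc_ctrl_sys S -> IOS S -> IOSS S -> ISS S /\ K_bounded_output S.
Proof.
move=> [[U0 Ulin] [nu0 _] _ [Hsh Hres] [Hid Hcaus Hcoc]].
move=> [bo [gy [Kbo [Kgy Hios]]]] [b [g1 [g2 [Kb [Kg1 [Kg2 Hioss]]]]]].
have Kgy' := proj1 Kgy.
split; last first.
  exists (fun r => bo r 0), gy; split; first exact: KL_K Kbo (lexx 0).
  split => // x u Uu.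
  by have := Hios x u (tzero R disc) Uu; rewrite /yout Hid.
have Hr : forall x u t M, Uset S u ->
    (forall s : time R disc, sval s <= sval t -> 0 <= `|yout S s x u| <= M) ->
    `|phi S t x u| <= b `|x| (sval t) + g1 (unorm S (trestr u (tzero R disc) t)) + g2 M.
  move=> x u t M Uu HM; have H := Hioss x u t Uu.
  rewrite -lee_fin EFinD; apply: (le_trans H); apply: leeD => //.
  exact: (sup_bound (f := fun s => `|yout S s x u|) Kg2 (lexx (sval t)) HM).
pose A := fun r => b r 0 + g2 (bo r 0 + bo r 0).
pose B := fun q => g1 q + g2 (gy q + gy q).
have KA : class_K A.
  exact: K_add (KL_K Kb (lexx 0)) (K_comp Kg2 (K_comp (K_dbl R) (KL_K Kbo (lexx 0)))).
have KB : class_K B.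
  exact: K_add Kg1 (K_comp Kg2 (K_comp (K_dbl R) Kgy')).
exists (fun r t => b (A r + A r) (tau t) + g2 (bo r (tau t) + bo r (tau t))).
exists (fun q => (b (B q + B q) 0 + g1 q + g2 (gy q + gy q)) + q).
split.
  exact: KL_tau (KL_add (KL_in Kb (K_comp (K_dbl R) KA)) (KL_comp (K_comp Kg2 (K_dbl R)) Kbo)).
split.
  exact: Kinf_of (K_add (K_add (K_comp (KL_K Kb (lexx 0)) (K_comp (K_dbl R) KB)) Kg1)
                        (K_comp Kg2 (K_comp (K_dbl R) Kgy'))).
move=> x u t Uu.
have [t1 [t2 [Ht [Ht1 Ht2]]]] := split_time t.
have E : phi S t x u = phi S t2 (phi S t1 x u) (tshift u t1).
  by rewrite -Hcoc //; congr phi; apply: time_eq.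
rewrite E.
have [Uv nuv] := Hsh u t1 Uu.
have t10 := tge0 t1; have t20 := tge0 t2; have ta0 := tau_ge0 (sval t).
have r0 : 0 <= `|x| by [].
have q0 := nu0 u Uu.
set r := `|x|; set q := unorm S u.
have Hz : `|phi S t1 x u| <= A r + B q.
  have := Hr x u t1 (bo r 0 + gy q) Uu.
  have Hb s : bo r (sval s) <= bo r 0 := KL_dec Kbo r0 (lexx 0) (tge0 s).
  have Hy : forall s : time R disc, sval s <= sval t1 -> 0 <= `|yout S s x u| <= bo r 0 + gy q.
    move=> s _; apply/andP; split => //.
    apply: le_trans (Hios x u s Uu) _; by rewrite lerD2r.
  move=> /(_ Hy) H; apply: (le_trans H).
  have [Ur nur] := Hres u (tzero R disc) t1 Uu t10.
  have H1 : b r (sval t1) <= b r 0 by apply: KL_dec.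
  have H2 : g1 (unorm S (trestr u (tzero R disc) t1)) <= g1 q by apply: (K_le Kg1) => //; apply: nu0.
  have H3 : g2 (bo r 0 + gy q) <= g2 (bo r 0 + bo r 0) + g2 (gy q + gy q).
    apply: (K_split Kg2); [exact: (KL_ge0 Kbo r0 (lexx 0))|exact: (K_ge0 Kgy' q0)].
  rewrite /A /B; lra.
set z := phi S t1 x u.
have z0 : 0 <= `|z| by [].
have H := Hr z (tshift u t1) t2 (bo r (sval t1) + gy q) Uv.
have Hy : forall s : time R disc, sval s <= sval t2 ->
    0 <= `|yout S s z (tshift u t1)| <= bo r (sval t1) + gy q.
  move=> s _; apply/andP; split => //.
  have -> : yout S s z (tshift u t1) = yout S (tadd t1 s) x u.
    rewrite /yout /z -Hcoc //; congr hout; rewrite /tshift; congr u.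
    by apply: time_eq => /=; rewrite addrC.
  apply: le_trans (Hios x u (tadd t1 s) Uu) _; rewrite lerD2r.
  apply: KL_dec => //=; rewrite lerDl; exact: tge0.
have {}H := H Hy.
apply: (le_trans H).
have A0 := K_ge0 KA r0; have B0 := K_ge0 KB q0.
have H1 : b `|z| (sval t2) <= b (A r + A r) (tau (sval t)) + b (B q + B q) 0.
  apply: le_trans (_ : b (A r + B q) (sval t2) <= _).
    by apply: KL_mon.
  apply: le_trans (K_split (KL_K Kb t20) A0 B0) _.
  apply: lerD; apply: KL_dec => //; by rewrite addr_ge0.
have [Ur nur] := Hres (tshift u t1) (tzero R disc) t2 Uv t20.
have H2 : g1 (unorm S (trestr (tshift u t1) (tzero R disc) t2)) <= g1 q.
  apply: (K_le Kg1); first exact: nu0.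
  exact: le_trans nur nuv.
have H3 : g2 (bo r (sval t1) + gy q) <= g2 (bo r (tau (sval t)) + bo r (tau (sval t))) + g2 (gy q + gy q).
  apply: le_trans (K_split Kg2 (KL_ge0 Kbo r0 t10) (K_ge0 Kgy' q0)) _.
  rewrite lerD2r; apply: (K_le Kg2); first by rewrite addr_ge0 // (KL_ge0 Kbo r0 t10).
  by apply: lerD; apply: KL_dec.
cbv beta. have q1 : 0 <= q by []. lra.
Qed.
End Main2.

Theorem proposition6 (R : realType) (disc : bool) (X : normedModType R)
  (U : lmodType R) (Y : normedModType R) (S : ctrl_sys disc X U Y) :
  is_fc_ctrl_sys S ->
  ((ISS S /\ K_bounded_output S) <-> (IOS S /\ IOSS S)).
Proof.
move=> fc; split.
- by move=> [H1 H2]; exact: dir1 fc H1 H2.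
- by move=> [H1 H2]; exact: dir2 fc H1 H2.
Qed.
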